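(* If $n\ge 1$ and $k\ge 2$ are integers, then the diameter of the $k$-Pell graph $\Pi_{n,k}$ is $$\operatorname{diam}(\Pi_{n,k})=nk-\left\lceil \frac{n}{2}\right\rceil.$$
   Context: For an integer $k\ge 2$, a $k$-Pell string is a finite word over the alphabet $\{0,1,\ldots,k-1,kk\}$, i.e. a word over $\{0,1,\ldots,k\}$ in which every maximal run of the letter $k$ has even length. For $n\ge 0$, the $k$-Pell graph $\Pi_{n,k}$ has as vertices all $k$-Pell strings of length $n$, and two vertices are adjacent if one is obtained from the other either by replacing a single letter $i$ by $i+1$ (or vice versa) for some $i\in\{0,1,\ldots,k-2\}$, or by replacing one factor $(k-1)(k-1)$ by $kk$ (or vice versa), in such a way that the resulting string is again a $k$-Pell string. *)

(* Defs.v *)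
From mathcomp Require Import all_boot.
Set Implicit Arguments. Unset Strict Implicit. Unset Printing Implicit Defensive.

(* A k-Pell string: a word over {0,...,k-1, kk}, i.e. a word over {0,...,k}
   parsed letter by letter where each letter k must be followed by another k
   (the pair kk forming one block). *)
Fixpoint is_pell (k : nat) (s : seq nat) : bool :=
  match s with
  | [::] => true
  | a :: t =>
      if a < k then is_pell k t
      else if a == k then
        (match t with
         | b :: t' => (b == k) && is_pell k t'
         | [::] => false
         end)
      else false
  end.

Definition pell_vertex (n k : nat) (s : seq nat) : Prop :=
  is_pell k s /\ size s = n.

Definition pell_step1 (k : nat) (s t : seq nat) : Prop :=
  exists (a b : seq nat) (x y : nat),
    s = a ++ x :: b /\ t = a ++ y :: b /\
    (y = x.+1 \/ x = y.+1) /\ maxn x y <= k - 1.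

Definition pell_step2 (k : nat) (s t : seq nat) : Prop :=
  exists a b : seq nat,
    (s = a ++ [:: k.-1; k.-1] ++ b /\ t = a ++ [:: k; k] ++ b) \/
    (s = a ++ [:: k; k] ++ b /\ t = a ++ [:: k.-1; k.-1] ++ b).

Definition pell_adj (k : nat) (s t : seq nat) : Prop :=
  is_pell k s /\ is_pell k t /\ (pell_step1 k s t \/ pell_step2 k s t).

Inductive walk (k : nat) : seq nat -> seq nat -> nat -> Prop :=
  | walk0 u : walk k u u 0
  | walkS u w v m : pell_adj k u w -> walk k w v m -> walk k u v m.+1.

Definition dist_le (k : nat) (u v : seq nat) (m : nat) : Prop :=
  exists2 m', m' <= m & walk k u v m'.

(* diam(Pi_{n,k}) = d : d is the least m such that all pairs of vertices are
   at distance at most m (i.e. the maximum of the distances). *)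
Definition pell_diam_is (n k d : nat) : Prop :=
  forall m : nat,
    (forall u v, pell_vertex n k u -> pell_vertex n k v -> dist_le k u v m)
    <-> d <= m.

(* Main.v *)
Require Import Defs.
From mathcomp Require Import all_boot.
From mathcomp Require Import zify.
Set Implicit Arguments. Unset Strict Implicit. Unset Printing Implicit Defensive.

Section Aux.
Variable k : nat.
Hypothesis hk : 2 <= k.

Lemma pell_lt a t : a < k -> is_pell k (a :: t) = is_pell k t.
Proof. by move=> h; rewrite /= h. Qed.

Lemma pell_kk t : is_pell k (k :: k :: t) = is_pell k t.
Proof. by rewrite /= ltnn eqxx. Qed.

Lemma pell_ind (P : seq nat -> Prop) :
  P [::] -> (forall a t, a < k -> is_pell k t -> P t -> P (a :: t)) ->
  (forall t, is_pell k t -> P t -> P (k :: k :: t)) ->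
  forall s, is_pell k s -> P s.
Proof.
move=> H0 H1 H2 s.
have [N] := ubnP (size s); elim: N s => // N IH [|a t] //= Hs.
case: ltnP => ha.
  move=> Ht; apply: H1 => //; apply: IH => //.
case: eqP => // ->; case: t Hs => // b t' Hs /andP [/eqP -> Ht].
apply: H2 => //; apply: IH => //; move: Hs => /=; lia.
Qed.

Lemma pell_cat s t : is_pell k s -> is_pell k t -> is_pell k (s ++ t).
Proof.
move=> Hs Ht; move: s Hs; apply: pell_ind => //= [a s ha _ IH|s _ IH].
- by rewrite ha.
- by rewrite ltnn eqxx.
Qed.

Lemma pell_all s : is_pell k s -> all (fun x => x <= k) s.
Proof.
move: s; apply: pell_ind => //= [a t ha _ ->|t _ ->]; rewrite ?leqnn ?andbT //.
all: by rewrite ltnW.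
Qed.

Lemma all_pell s : all (fun x => x < k) s -> is_pell k s.
Proof. by elim: s => //= a s IH /andP [-> /IH]. Qed.

Lemma adj_sym s t : pell_adj k s t -> pell_adj k t s.
Proof.
move=> [Hs [Ht [[a [b [x [y [E1 [E2 [E3 E4]]]]]]]|[a [b [[E1 E2]|[E1 E2]]]]]]];
  split=> //; split=> //.
- left; exists a, b, y, x; split=> //; split=> //; split; first by case: E3; auto.
  by rewrite maxnC.
- by right; exists a, b; right.
- by right; exists a, b; left.
Qed.

Lemma walk_cat u w v m1 m2 : walk k u w m1 -> walk k w v m2 -> walk k u v (m1 + m2).
Proof.
move=> H; elim: H v m2 => [u' v m2 Hw|u' w' w'' m1' Ha _ IH v m2 Hw] //.
by rewrite addSn; apply: walkS Ha (IH _ _ Hw).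
Qed.

Lemma walk_rev u v m : walk k u v m -> walk k v u m.
Proof.
elim=> [u'|u' w v' m' Ha _ IH]; first exact: walk0.
rewrite -addn1; exact: (walk_cat IH (walkS (adj_sym Ha) (walk0 _ _))).
Qed.

Lemma adj_ext p s u v : is_pell k p -> is_pell k s -> pell_adj k u v ->
  pell_adj k (p ++ u ++ s) (p ++ v ++ s).
Proof.
move=> Hp Hs [Hu [Hv [[a [b [x [y [E1 [E2 E3]]]]]]|[a [b E]]]]].
  split; first by apply: pell_cat => //; apply: pell_cat.
  split; first by apply: pell_cat => //; apply: pell_cat.
  left; exists (p ++ a), (b ++ s), x, y.
  by rewrite E1 E2 -!catA /=.
split; first by apply: pell_cat => //; apply: pell_cat.
split; first by apply: pell_cat => //; apply: pell_cat.
right; exists (p ++ a), (b ++ s).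
by case: E => [[-> ->]|[-> ->]]; [left|right]; rewrite -!catA.
Qed.

Lemma walk_ext p s u v m : is_pell k p -> is_pell k s -> walk k u v m ->
  walk k (p ++ u ++ s) (p ++ v ++ s) m.
Proof.
move=> Hp Hs; elim=> [u'|u' w v' m' Ha _ IH]; first exact: walk0.
exact: walkS (adj_ext Hp Hs Ha) IH.
Qed.

Lemma walk_letter_up d a : a + d < k -> walk k [:: a] [:: a + d] d.
Proof.
elim: d a => [|d IH] a h; first by rewrite addn0; apply: walk0.
apply: (@walkS _ _ [:: a.+1]); last by rewrite -addSnnS; apply: IH; lia.
split; first by rewrite /= (_ : a < k) //; lia.
split; first by rewrite /= (_ : a.+1 < k) //; lia.
left; exists [::], [::], a, a.+1; split=> //; split=> //; split; first by left.
lia.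
Qed.

Lemma walk_letter a b : a < k -> b < k -> walk k [:: a] [:: b] ((a - b) + (b - a)).
Proof.
move=> ha hb; case: (leqP a b) => h.
  have -> : a - b = 0 by lia.
  have E : b = a + (b - a) by lia.
  rewrite add0n {1}E; apply: walk_letter_up; lia.
have -> : b - a = 0 by lia.
have E : a = b + (a - b) by lia.
rewrite addn0; apply: walk_rev; rewrite {1}E; apply: walk_letter_up; lia.
Qed.

Definition low (s : seq nat) := map (fun x => if x == k then k.-1 else x) s.

Lemma walk_low s : is_pell k s -> walk k s (low s) (count_mem k s)./2.
Proof.
move: s; apply: pell_ind => [|a t ha Ht IH|t Ht IH]; first exact: walk0.
  rewrite /= (_ : (a == k) = false); last by apply/eqP; lia.
  rewrite add0n.
  have Ha1 : is_pell k [:: a] by rewrite /= ha.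
  have := walk_ext (p := [:: a]) (s := [::]) Ha1 isT IH.
  by rewrite !cats0.
rewrite /= eqxx /= add0n.
apply: (@walkS _ _ [:: k.-1, k.-1 & t]).
  split; first by rewrite pell_kk.
  split; first by rewrite /= (_ : k.-1 < k) //; lia.
  by right; exists [::], t; right.
have := walk_ext (p := [:: k.-1; k.-1]) (s := [::]) _ isT IH.
rewrite !cats0; apply; apply: all_pell; rewrite /= andbT; lia.
Qed.

Fixpoint dl (x y : seq nat) :=
  match x, y with
  | a :: x', b :: y' => (a - b) + (b - a) + dl x' y'
  | _, _ => 0
  end.

Lemma walk_dl x y : all (fun z => z < k) x -> all (fun z => z < k) y ->
  size x = size y -> walk k x y (dl x y).
Proof.
elim: x y => [|a x IH] [|b y] //=; first by move=> *; apply: walk0.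
move=> /andP [ha hx] /andP [hb hy] [hs].
have Hb : is_pell k [:: b] by rewrite /= hb.
have W2 := walk_ext (p := [:: b]) (s := [::]) Hb isT (IH y hx hy hs).
rewrite !cats0 /= in W2.
have W1 := walk_ext (p := [::]) (s := x) isT (all_pell hx) (walk_letter ha hb).
exact: walk_cat W1 W2.
Qed.

Lemma low_lt s : all (fun z => z <= k) s -> all (fun z => z < k) (low s).
Proof.
elim: s => //= a s IH /andP [ha /IH ->]; rewrite andbT.
case: eqP => h; lia.
Qed.

Lemma arith u v : size u = size v -> all (fun z => z <= k) u -> all (fun z => z <= k) v ->
  count_mem k u + count_mem k v + 2 * dl (low u) (low v) <= size u * (2 * k - 1).
Proof.
elim: u v => [|a u IH] [|b v] //= [hs] /andP [ha hu] /andP [hb hv].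
have := IH v hs hu hv.
case: eqP => Ea; case: eqP => Eb /=; lia.
Qed.

Definition f2 (s : seq nat) := sumn (map (fun x => if x == k then 2 * k - 1 else 2 * x) s).

Lemma f2_cat s t : f2 (s ++ t) = f2 s + f2 t.
Proof. by rewrite /f2 map_cat sumn_cat. Qed.

Lemma adj_f2 s t : pell_adj k s t -> f2 t <= f2 s + 2.
Proof.
move=> [_ [_ [[a [b [x [y [-> [-> [E3 E4]]]]]]]|[a [b [[-> ->]|[-> ->]]]]]]];
  rewrite !f2_cat /f2 /=.
- rewrite (_ : (x == k) = false); last by apply/eqP; lia.
  rewrite (_ : (y == k) = false); last by apply/eqP; lia.
  case: E3 => ->; lia.
- rewrite eqxx (_ : (k.-1 == k) = false); last by apply/eqP; lia.
  lia.
- rewrite eqxx (_ : (k.-1 == k) = false); last by apply/eqP; lia.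
  lia.
Qed.

Lemma walk_f2 u v m : walk k u v m -> f2 v <= f2 u + 2 * m.
Proof.
elim=> [u'|u' w v' m' Ha _ IH]; first by rewrite addn0.
have := adj_f2 Ha; lia.
Qed.

End Aux.

Theorem proposition4p3 (n k : nat) (hn : 1 <= n) (hk : 2 <= k) :
  pell_diam_is n k (n * k - uphalf n).
Proof.
move=> m; split.
- pose top := nseq (odd n) k.-1 ++ nseq (n./2).*2 k.
  have Htop : pell_vertex n k top.
    split; last by rewrite size_cat !size_nseq odd_double_half.
    apply: (pell_cat hk).
      case: (odd n); last by [].
      apply: all_pell; rewrite /= andbT; lia.
    elim: (n./2) => //= h IH; by rewrite ltnn eqxx.
  have H0 : pell_vertex n k (nseq n 0).
    split; last by rewrite size_nseq.
    apply: all_pell; rewrite all_nseq; apply/orP; right; lia.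
  move=> /(_ _ _ H0 Htop) [m' hm' /walk_f2] Hf.
  have : f2 k top <= 2 * m'.
    move: Hf => /(_ hk); rewrite /f2 map_nseq /= sumn_nseq.
    rewrite (_ : (0 == k) = false); last by apply/eqP; lia.
    by rewrite muln0 mul0n add0n.
  rewrite /top f2_cat /f2 !map_nseq !sumn_nseq.
  rewrite (_ : (k.-1 == k) = false); last by apply/eqP; lia.
  rewrite eqxx uphalf_half.
  have := odd_double_half n; have : odd n <= 1 by apply: leq_b1.
  rewrite -!muln2; lia.
- move=> hD u v [Hu Su] [Hv Sv].
  have Wu := walk_low hk Hu.
  have Wv := walk_rev (walk_low hk Hv).
  have Sl : size (low k u) = size (low k v) by rewrite !size_map Su Sv.
  have Wd : walk k (low k u) (low k v) (dl (low k u) (low k v)).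
    by apply: walk_dl => //; apply: low_lt => //; apply: pell_all.
  have W := walk_cat (walk_cat Wu Wd) Wv.
  exists ((count_mem k u)./2 + dl (low k u) (low k v) + (count_mem k v)./2) => //.
  have Suv : size u = size v by rewrite Su Sv.
  have : count_mem k u + count_mem k v + 2 * dl (low k u) (low k v) <= size u * (2 * k - 1).
    by apply: arith => //; apply: pell_all.
  rewrite Su; move: hD; rewrite uphalf_half.
  have := odd_double_half n; have : odd n <= 1 by apply: leq_b1.
  rewrite -!muln2 -!divn2; lia.
Qed.
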